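(* Let $\mathcal{I}\in\mathrm{Ins}(\Omega,\mathcal{H})$ and $\mathcal{J}\in\mathrm{Ins}(\Lambda,\mathcal{H},\mathcal{V})$ be instruments. Then: if $\mathcal{I}$ does not disturb $\mathcal{J}$, then $\mathsf{A}^{\mathcal{I}}$ does not disturb $\mathcal{J}$; if $\mathsf{A}^{\mathcal{I}}$ does not disturb $\mathcal{J}$, then $\mathsf{A}^{\mathcal{I}}$ and $\mathcal{J}$ are compatible; and if $\mathsf{A}^{\mathcal{I}}$ and $\mathcal{J}$ are compatible, then $\mathsf{A}^{\mathcal{I}}$ is compatible with $\Phi^{\mathcal{J}}$ and $\mathsf{A}^{\mathcal{I}}$ is compatible with $\mathsf{A}^{\mathcal{J}}$.
   Context: All Hilbert spaces are finite-dimensional and complex, and all outcome sets are finite. A POVM $\mathsf{A}\in\mathcal{O}(\Omega,\mathcal{H})$ is a map $x\mapsto \mathsf{A}(x)$ from $\Omega$ to positive operators on $\mathcal{H}$ with $\sum_x \mathsf{A}(x)=I$. An instrument $\mathcal{I}\in\mathrm{Ins}(\Omega,\mathcal{H},\mathcal{K})$ is a family $(\mathcal{I}_x)_{x\in\Omega}$ of completely positive trace-nonincreasing linear maps $\mathcal{L}(\mathcal{H})\to\mathcal{L}(\mathcal{K})$ such that $\Phi^{\mathcal{I}}:=\sum_x\mathcal{I}_x$ is trace preserving (the induced channel); its induced POVM $\mathsf{A}^{\mathcal{I}}$ is defined by $\mathrm{tr}[\mathsf{A}^{\mathcal{I}}(x)\varrho]=\mathrm{tr}[\mathcal{I}_x(\varrho)]$;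 $\mathrm{Ins}(\Omega,\mathcal{H}):=\mathrm{Ins}(\Omega,\mathcal{H},\mathcal{H})$. An instrument $\mathcal{I}\in\mathrm{Ins}(\Omega,\mathcal{H})$ does not disturb $\mathcal{J}\in\mathrm{Ins}(\Lambda,\mathcal{H},\mathcal{V})$ if $\mathcal{J}_y\circ\Phi^{\mathcal{I}}=\mathcal{J}_y$ for all $y$. A POVM $\mathsf{A}\in\mathcal{O}(\Omega,\mathcal{H})$ does not disturb $\mathcal{J}$ if some $\mathcal{I}'\in\mathrm{Ins}(\Omega,\mathcal{H})$ with $\mathsf{A}^{\mathcal{I}'}=\mathsf{A}$ does not disturb $\mathcal{J}$. Two instruments $\mathcal{I}\in\mathrm{Ins}(\Omega,\mathcal{H},\mathcal{K})$, $\mathcal{J}\in\mathrm{Ins}(\Lambda,\mathcal{H},\mathcal{V})$ are compatible if there is $\mathcal{G}\in\mathrm{Ins}(\Omega\times\Lambda,\mathcal{H},\mathcal{K}\otimes\mathcal{V})$ with $\sum_{x}\mathrm{tr}_{\mathcal{K}}[\mathcal{G}_{(x,y)}(\varrho)]=\mathcal{J}_y(\varrho)$ for all $y$ and $\sum_y\mathrm{tr}_{\mathcal{V}}[\mathcal{G}_{(x,y)}(\varrho)]=\mathcal{I}_x(\varrho)$ for all $x$, for all states $\varrho$. A POVM $\mathsf{A}\in\mathcal{O}(\Omega,\mathcal{H})$ is identified with the instrument in $\mathrm{Ins}(\Omega,\mathcal{H},\mathbb{C})$ given by $\varrho\mapsto\mathrm{tr}[\mathsf{A}(x)\varrho]$,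 and a channel with a one-outcome instrument; compatibility involving POVMs or channels is defined through these identifications. *)

(* Defs.v *)
(* Finite-dimensional complex Hilbert spaces are modelled as
   C^n with C an arbitrary numClosedFieldType (e.g. algC, or R[i] for R rcf);
   operators on C^n are matrices 'M[C]_n. *)
From HB Require Import structures.
From mathcomp Require Import all_boot all_order all_algebra.
Set Implicit Arguments. Unset Strict Implicit. Unset Printing Implicit Defensive.
Import Order.TTheory GRing.Theory Num.Theory.
Local Open Scope ring_scope.

Section QDefs.
Variable C : numClosedFieldType.

Definition adjmx (k l : nat) (A : 'M[C]_(k, l)) : 'M[C]_(l, k) :=
  (map_mx Num.conj A)^T.

Definition psd (N : nat) (A : 'M[C]_N) : Prop :=
  forall v : 'cV[C]_N, 0 <= (adjmx v *m A *m v) 0 0.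

Definition state (n : nat) (rho : 'M[C]_n) : Prop := psd rho /\ \tr rho = 1.

Definition is_linear (n m : nat) (f : 'M[C]_n -> 'M[C]_m) : Prop :=
  forall (a : C) (X Y : 'M[C]_n), f (a *: X + Y) = a *: f X + f Y.

(* The element of L(C^k (x) C^n) = 'M_(k*n) given by its k x k blocks
   B a b : 'M_n (basis e_a (x) e_i is indexed by mxvec_index a i). *)
Definition blockmx (k n : nat) (B : 'I_k -> 'I_k -> 'M[C]_n) : 'M[C]_(k * n) :=
  \sum_(a < k) \sum_(b < k) \sum_(i < n) \sum_(j < n)
     B a b i j *: delta_mx (mxvec_index a i) (mxvec_index b j).

(* complete positivity: id_k (x) f is positive for every ancilla dimension k *)
Definition completely_positive (n m : nat) (f : 'M[C]_n -> 'M[C]_m) : Prop :=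
  forall (k : nat) (B : 'I_k -> 'I_k -> 'M[C]_n),
    psd (blockmx B) -> psd (blockmx (fun a b => f (B a b))).

Definition trace_nonincreasing (n m : nat) (f : 'M[C]_n -> 'M[C]_m) : Prop :=
  forall rho : 'M[C]_n, psd rho -> \tr (f rho) <= \tr rho.

Definition trace_preserving (n m : nat) (f : 'M[C]_n -> 'M[C]_m) : Prop :=
  forall X : 'M[C]_n, \tr (f X) = \tr X.

Definition induced_channel (O : finType) (n m : nat)
  (I : O -> 'M[C]_n -> 'M[C]_m) : 'M[C]_n -> 'M[C]_m :=
  fun X => \sum_(x : O) I x X.

Definition instrument (O : finType) (n m : nat)
  (I : O -> 'M[C]_n -> 'M[C]_m) : Prop :=
  (forall x, is_linear (I x)) /\
  (forall x, completely_positive (I x)) /\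
  (forall x, trace_nonincreasing (I x)) /\
  trace_preserving (induced_channel I).

Definition induces_povm (O : finType) (n m : nat)
  (I : O -> 'M[C]_n -> 'M[C]_m) (A : O -> 'M[C]_n) : Prop :=
  forall (x : O) (rho : 'M[C]_n), state rho -> \tr (A x *m rho) = \tr (I x rho).

(* a POVM identified with an instrument into L(C) = 'M_1 *)
Definition povm_ins (O : finType) (n : nat) (A : O -> 'M[C]_n)
  : O -> 'M[C]_n -> 'M[C]_1 :=
  fun x rho => (\tr (A x *m rho))%:M.

Definition chan_ins (n m : nat) (Phi : 'M[C]_n -> 'M[C]_m)
  : unit -> 'M[C]_n -> 'M[C]_m := fun _ => Phi.

Definition ins_nondisturb (O L : finType) (n p : nat)
  (I : O -> 'M[C]_n -> 'M[C]_n) (J : L -> 'M[C]_n -> 'M[C]_p) : Prop :=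
  forall (y : L) (X : 'M[C]_n), J y (induced_channel I X) = J y X.

Definition povm_nondisturb (O L : finType) (n p : nat)
  (A : O -> 'M[C]_n) (J : L -> 'M[C]_n -> 'M[C]_p) : Prop :=
  exists I' : O -> 'M[C]_n -> 'M[C]_n,
    [/\ instrument I', induces_povm I' A & ins_nondisturb I' J].

(* partial traces on C^m (x) C^p = C^(m*p) (basis e_a (x) e_b ~ mxvec_index a b) *)
Definition ptrace1 (m p : nat) (X : 'M[C]_(m * p)) : 'M[C]_p :=
  \matrix_(b, b') \sum_(a < m) X (mxvec_index a b) (mxvec_index a b').
Definition ptrace2 (m p : nat) (X : 'M[C]_(m * p)) : 'M[C]_m :=
  \matrix_(a, a') \sum_(b < p) X (mxvec_index a b) (mxvec_index a' b).

Definition compatible (O L : finType) (n m p : nat)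
  (I : O -> 'M[C]_n -> 'M[C]_m) (J : L -> 'M[C]_n -> 'M[C]_p) : Prop :=
  exists G : O * L -> 'M[C]_n -> 'M[C]_(m * p),
    instrument G /\
    forall rho : 'M[C]_n, state rho ->
      (forall y : L, \sum_(x : O) ptrace1 (G (x, y) rho) = J y rho) /\
      (forall x : O, \sum_(y : L) ptrace2 (G (x, y) rho) = I x rho).

End QDefs.

(* Main.v *)
Require Import Defs.
From HB Require Import structures.
From mathcomp Require Import all_boot all_order all_algebra.
Import Order.TTheory GRing.Theory Num.Theory.
Local Open Scope ring_scope.
Set Implicit Arguments. Unset Strict Implicit.

Lemma eq_idx (m n : nat) (a a' : 'I_m) (i i' : 'I_n) :
  (mxvec_index a i == mxvec_index a' i') = (a == a') && (i == i').
Proof.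
apply/eqP/andP => [h|[/eqP-> /eqP->] //].
have [g gK _] := curry_mxvec_bij m n.
have := gK (a, i) isT; have := gK (a', i') isT => /= h1 h2.
by move: h2; rewrite h h1 => -[-> ->].
Qed.

Lemma sum_idx (C : nmodType) (m n : nat) (F : 'I_(m * n) -> C) :
  \sum_r F r = \sum_(a < m) \sum_(i < n) F (mxvec_index a i).
Proof.
rewrite pair_big /=.
rewrite (reindex (uncurry (@mxvec_index m n))) /=; last first.
  case: (curry_mxvec_bij m n) => g h1 h2; exists g => x _; [exact: h1 | exact: h2].
by apply: eq_bigr => -[i j].
Qed.

Definition sndi (m n : nat) (r : 'I_(m * n)) : 'I_n :=
  (enum_val (cast_ord (esym (mxvec_cast m n)) r)).2.

Lemma sndi_idx (m n : nat) (a : 'I_m) (i : 'I_n) : sndi (mxvec_index a i) = i.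
Proof. by rewrite /sndi /mxvec_index cast_ordK enum_rankK. Qed.

Lemma sumE (C : numClosedFieldType) m n (I : Type) (r : seq I) (P : pred I) (E : I -> 'M[C]_(m,n)) i j :
  (\sum_(k <- r | P k) E k) i j = \sum_(k <- r | P k) E k i j.
Proof. elim/big_rec2: _ => [|k x y _ <-]; by rewrite mxE. Qed.

Lemma blockmxE (C : numClosedFieldType) (k n : nat) (B : 'I_k -> 'I_k -> 'M[C]_n) a b i j :
  blockmx B (mxvec_index a i) (mxvec_index b j) = B a b i j.
Proof.
rewrite /blockmx sumE (bigD1 a) //= [X in _ + X]big1 ?addr0 => [|a' ne]; last first.
  rewrite sumE big1 // => b' _; rewrite sumE big1 // => i' _.
  rewrite sumE big1 // => j' _.
  by rewrite !mxE !eq_idx (eq_sym a) (negbTE ne) /= mulr0.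
rewrite sumE (bigD1 b) //= [X in _ + X]big1 ?addr0 => [|b' ne]; last first.
  rewrite sumE big1 // => i' _.
  rewrite sumE big1 // => j' _.
  by rewrite !mxE !eq_idx (eq_sym b) (negbTE ne) /= !andbF mulr0.
rewrite sumE (bigD1 i) //= [X in _ + X]big1 ?addr0 => [|i' ne]; last first.
  rewrite sumE big1 // => j' _.
  by rewrite !mxE !eq_idx (eq_sym i) (negbTE ne) /= !andbF mulr0.
rewrite sumE (bigD1 j) //= [X in _ + X]big1 ?addr0 => [|j' ne]; last first.
  by rewrite !mxE !eq_idx (eq_sym j) (negbTE ne) /= !andbF mulr0.
by rewrite !mxE !eq_idx !eqxx mulr1.
Qed.

Definition fsti (m n : nat) (r : 'I_(m * n)) : 'I_m :=
  (enum_val (cast_ord (esym (mxvec_cast m n)) r)).1.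

Lemma fsti_idx (m n : nat) (a : 'I_m) (i : 'I_n) : fsti (mxvec_index a i) = a.
Proof. by rewrite /fsti /mxvec_index cast_ordK enum_rankK. Qed.

Definition Q (C : numClosedFieldType) N (X : 'M[C]_N) (v : 'I_N -> C) :=
  \sum_i \sum_j (v i)^* * X i j * v j.

Lemma quadE (C : numClosedFieldType) N (X : 'M[C]_N) (v : 'cV[C]_N) :
  (adjmx v *m X *m v) 0 0 = Q X (fun i => v i 0).
Proof.
rewrite mxE /Q.
under eq_bigr => j _ do rewrite mxE big_distrl /=.
rewrite exchange_big /=; apply: eq_bigr => i _; apply: eq_bigr => j _.
by rewrite !mxE.
Qed.

Lemma psdE (C : numClosedFieldType) N (X : 'M[C]_N) :
  psd X <-> forall v, 0 <= Q X v.
Proof.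
split=> [H v|H v]; last by rewrite quadE.
have := H (\col_i v i); rewrite quadE.
suff -> : Q X (fun i => (\col_i0 v i0) i 0) = Q X v by [].
by apply: eq_bigr => i _; apply: eq_bigr => j _; rewrite !mxE.
Qed.

Definition QB (C : numClosedFieldType) k n (B : 'I_k -> 'I_k -> 'M[C]_n)
  (w : 'I_k -> 'I_n -> C) :=
  \sum_a \sum_i \sum_b \sum_j (w a i)^* * B a b i j * w b j.

Lemma Q_blockmx (C : numClosedFieldType) k n (B : 'I_k -> 'I_k -> 'M[C]_n) v :
  Q (blockmx B) v = QB B (fun a i => v (mxvec_index a i)).
Proof.
rewrite /Q /QB sum_idx; apply: eq_bigr => a _; apply: eq_bigr => i _.
by rewrite sum_idx; apply: eq_bigr => b _; apply: eq_bigr => j _; rewrite blockmxE.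
Qed.

Lemma psd_blockE (C : numClosedFieldType) k n (B : 'I_k -> 'I_k -> 'M[C]_n) :
  psd (blockmx B) <-> forall w, 0 <= QB B w.
Proof.
split=> [/psdE H w|H]; last by apply/psdE => v; rewrite Q_blockmx.
have := H (fun r => w (fsti r) (sndi r)); rewrite Q_blockmx.
suff -> : QB B (fun a i => w (fsti (mxvec_index a i)) (sndi (mxvec_index a i)))
  = QB B w by [].
apply: eq_bigr => a _; apply: eq_bigr => i _; apply: eq_bigr => b _.
by apply: eq_bigr => j _; rewrite !fsti_idx !sndi_idx.
Qed.

Lemma QB1 (C : numClosedFieldType) n (B : 'I_1 -> 'I_1 -> 'M[C]_n) w :
  QB B w = Q (B ord0 ord0) (w ord0).
Proof.
rewrite /QB big_ord1; apply: eq_bigr => i _; by rewrite big_ord1.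
Qed.

Lemma cp_psd (C : numClosedFieldType) n m (f : 'M[C]_n -> 'M[C]_m) X :
  completely_positive f -> psd X -> psd (f X).
Proof.
move=> cpf pX.
have H : psd (blockmx (fun _ _ : 'I_1 => f X)).
  apply: (cpf 1%N (fun _ _ => X)); apply/psd_blockE => w.
  rewrite QB1; exact: (psdE X).1 pX (w ord0).
apply/psdE => v; move/psd_blockE: H => H.
by have := H (fun _ => v); rewrite QB1.
Qed.

Lemma psd_tr (C : numClosedFieldType) n (X : 'M[C]_n) : psd X -> 0 <= \tr X.
Proof.
move=> /psdE H; rewrite /mxtrace; apply: sumr_ge0 => l _.
have := H (fun i => if i == l then 1 else 0).
rewrite /Q (bigD1 l) //= [X in _ + X]big1 ?addr0 => [|i ne]; last first.
  by apply: big1 => j _; rewrite (negbTE ne) rmorph0 !mul0r.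
rewrite (bigD1 l) //= [X in _ + X]big1 ?addr0 => [|j ne]; last first.
  by rewrite (negbTE ne) mulr0.
by rewrite eqxx rmorph1 mul1r mulr1.
Qed.

Lemma lin_sum (C : numClosedFieldType) n m (f : 'M[C]_n -> 'M[C]_m) (T : Type)
  (r : seq T) (P : pred T) (F : T -> 'M[C]_n) :
  is_linear f -> f (\sum_(i <- r | P i) F i) = \sum_(i <- r | P i) f (F i).
Proof.
move=> H.
have f0 : f 0 = 0.
  have := H 1 0 0; rewrite !scale1r addr0 => h.
  by apply: (@addrI _ (f 0)); rewrite addr0 -h.
have fD : {morph f : x y / x + y >-> x + y}.
  by move=> x y; have := H 1 x y; rewrite !scale1r.
exact: (big_morph f fD f0).
Qed.

Lemma psd0 (C : numClosedFieldType) n : psd (0 : 'M[C]_n).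
Proof. by move=> v; rewrite mulmx0 mul0mx mxE. Qed.

Lemma psdD (C : numClosedFieldType) n (X Y : 'M[C]_n) : psd X -> psd Y -> psd (X + Y).
Proof. by move=> hX hY v; rewrite mulmxDr mulmxDl mxE; apply: addr_ge0. Qed.

Lemma blockmxD (C : numClosedFieldType) k n (X Y : 'I_k -> 'I_k -> 'M[C]_n) :
  blockmx (fun a b => X a b + Y a b) = blockmx X + blockmx Y.
Proof.
apply/matrixP => r s; case/mxvec_indexP: r => a i; case/mxvec_indexP: s => b j.
by rewrite mxE !blockmxE mxE.
Qed.

Lemma blockmx0 (C : numClosedFieldType) k n :
  blockmx (fun a b : 'I_k => (0 : 'M[C]_n)) = 0.
Proof.
apply/matrixP => r s; case/mxvec_indexP: r => a i; case/mxvec_indexP: s => b j.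
by rewrite blockmxE !mxE.
Qed.

Lemma blockmx_ext (C : numClosedFieldType) k n (X Y : 'I_k -> 'I_k -> 'M[C]_n) :
  (forall a b, X a b = Y a b) -> blockmx X = blockmx Y.
Proof.
move=> H; rewrite /blockmx; apply: eq_bigr => a _; apply: eq_bigr => b _.
by rewrite H.
Qed.

Lemma cp_sum (C : numClosedFieldType) n m (T : Type) (r : seq T)
  (G : T -> 'M[C]_n -> 'M[C]_m) :
  (forall i, completely_positive (G i)) ->
  completely_positive (fun X => \sum_(i <- r) G i X).
Proof.
move=> H; elim: r => [|y r IH] k B pB.
  rewrite (@blockmx_ext _ _ _ _ (fun a b => 0)); last by move=> a b; rewrite big_nil.
  rewrite blockmx0; exact: psd0.
rewrite (@blockmx_ext _ _ _ _ (fun a b => G y (B a b) + \sum_(i <- r) G i (B a b))); last first.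
  by move=> a b; rewrite big_cons.
rewrite blockmxD; apply: psdD; [exact: H | exact: IH].
Qed.

Lemma lin_sumf (C : numClosedFieldType) n m (T : Type) (r : seq T)
  (G : T -> 'M[C]_n -> 'M[C]_m) :
  (forall i, is_linear (G i)) -> is_linear (fun X => \sum_(i <- r) G i X).
Proof.
move=> H a X Y /=; under eq_bigr => i _ do rewrite H.
by rewrite big_split /= scaler_sumr.
Qed.

Lemma ptrace1D (C : numClosedFieldType) m p (T : Type) (r : seq T) (P : pred T)
  (F : T -> 'M[C]_(m * p)) :
  ptrace1 (\sum_(i <- r | P i) F i) = \sum_(i <- r | P i) ptrace1 (F i).
Proof.
have f0 : ptrace1 (0 : 'M[C]_(m * p)) = 0.
  by apply/matrixP => b b'; rewrite !mxE big1 // => a _; rewrite mxE.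
have fD : {morph (@ptrace1 C m p) : x y / x + y >-> x + y}.
  move=> x y; apply/matrixP => b b'; rewrite !mxE -big_split.
  by apply: eq_bigr => a _; rewrite mxE.
exact: (big_morph _ fD f0).
Qed.

Lemma ptrace2D (C : numClosedFieldType) m p (T : Type) (r : seq T) (P : pred T)
  (F : T -> 'M[C]_(m * p)) :
  ptrace2 (\sum_(i <- r | P i) F i) = \sum_(i <- r | P i) ptrace2 (F i).
Proof.
have f0 : ptrace2 (0 : 'M[C]_(m * p)) = 0.
  by apply/matrixP => b b'; rewrite !mxE big1 // => a _; rewrite mxE.
have fD : {morph (@ptrace2 C m p) : x y / x + y >-> x + y}.
  move=> x y; apply/matrixP => b b'; rewrite !mxE -big_split.
  by apply: eq_bigr => a _; rewrite mxE.
exact: (big_morph _ fD f0).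
Qed.

Lemma tr_ptrace1 (C : numClosedFieldType) m p (X : 'M[C]_(m * p)) :
  \tr (ptrace1 X) = \tr X.
Proof.
rewrite /mxtrace sum_idx exchange_big /=; apply: eq_bigr => b _; by rewrite mxE.
Qed.

Lemma tr_ptrace2 (C : numClosedFieldType) m p (X : 'M[C]_(m * p)) :
  \tr (ptrace2 X) = \tr X.
Proof.
rewrite /mxtrace sum_idx; apply: eq_bigr => b _; by rewrite mxE.
Qed.

Definition Lift (C : numClosedFieldType) p (Y : 'M[C]_p) : 'M[C]_(1 * p) :=
  \matrix_(r, s) Y (sndi r) (sndi s).

Lemma ptrace1_Lift (C : numClosedFieldType) p (Y : 'M[C]_p) : ptrace1 (Lift Y) = Y.
Proof. by apply/matrixP => b b'; rewrite mxE big_ord1 mxE !sndi_idx. Qed.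

Lemma ptrace2_Lift (C : numClosedFieldType) p (Y : 'M[C]_p) :
  ptrace2 (Lift Y) = (\tr Y)%:M.
Proof.
apply/matrixP => a a'; rewrite !ord1 !mxE eqxx mulr1n /mxtrace.
by apply: eq_bigr => b _; rewrite mxE !sndi_idx.
Qed.

Lemma tr_Lift (C : numClosedFieldType) p (Y : 'M[C]_p) : \tr (Lift Y) = \tr Y.
Proof. by rewrite -tr_ptrace1 ptrace1_Lift. Qed.

Lemma Lift_lin (C : numClosedFieldType) p (a : C) (X Y : 'M[C]_p) :
  Lift (a *: X + Y) = a *: Lift X + Lift Y.
Proof. by apply/matrixP => r s; rewrite !mxE. Qed.

Lemma cp_Lift (C : numClosedFieldType) n p (f : 'M[C]_n -> 'M[C]_p) :
  completely_positive f -> completely_positive (fun X => Lift (f X)).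
Proof.
move=> cpf k B /cpf /psd_blockE H; apply/psd_blockE => w.
have := H (fun a i => w a (mxvec_index ord0 i)).
suff -> : QB (fun a b => Lift (f (B a b))) w =
  QB (fun a b => f (B a b)) (fun a i => w a (mxvec_index ord0 i)) by [].
apply: eq_bigr => a _; rewrite sum_idx big_ord1; apply: eq_bigr => i _.
apply: eq_bigr => b _; rewrite sum_idx big_ord1; apply: eq_bigr => j _.
by rewrite mxE !sndi_idx.
Qed.

Lemma QB_delta (C : numClosedFieldType) k n (Y : 'I_k -> 'I_k -> 'M[C]_n) l
  (u : 'I_k -> C) :
  QB Y (fun a i => if i == l then u a else 0) =
  \sum_a \sum_b (u a)^* * Y a b l l * u b.
Proof.
apply: eq_bigr => a _.
rewrite (bigD1 l) //= [X in _ + X]big1 ?addr0 => [|i ne]; last first.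
  by apply: big1 => b _; apply: big1 => j _; rewrite (negbTE ne) rmorph0 !mul0r.
rewrite eqxx; apply: eq_bigr => b _.
rewrite (bigD1 l) //= [X in _ + X]big1 ?addr0 => [|j ne]; last first.
  by rewrite (negbTE ne) mulr0.
by rewrite eqxx.
Qed.

Lemma cp_trS (C : numClosedFieldType) n m (f : 'M[C]_n -> 'M[C]_m) :
  completely_positive f ->
  completely_positive (fun X => ((\tr (f X))%:M : 'M[C]_(1 * 1))).
Proof.
move=> cpf k B /cpf /psd_blockE H; apply/psd_blockE => w.
pose c0 : 'I_(1 * 1) := mxvec_index ord0 ord0.
have -> : QB (fun a b => ((\tr (f (B a b)))%:M : 'M[C]_(1 * 1))) w =
  \sum_l QB (fun a b => f (B a b)) (fun a i => if i == l then w a c0 else 0).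
  under [RHS]eq_bigr => l _ do rewrite QB_delta.
  rewrite [RHS]exchange_big /=; apply: eq_bigr => a _.
  rewrite [RHS]exchange_big /= sum_idx big_ord1 big_ord1; apply: eq_bigr => b _.
  rewrite sum_idx big_ord1 big_ord1 mxE eqxx mulr1n /mxtrace.
  by rewrite mulr_sumr mulr_suml.
by apply: sumr_ge0 => l _; apply: H.
Qed.

Lemma scalD (C : numClosedFieldType) m (a b : C) :
  ((a + b)%:M : 'M[C]_m) = a%:M + b%:M.
Proof. by apply/matrixP => i j; rewrite !mxE mulrnDl. Qed.

Lemma scal_sum (C : numClosedFieldType) m (T : Type) (r : seq T) (P : pred T) (F : T -> C) :
  ((\sum_(i <- r | P i) F i)%:M : 'M[C]_m) = \sum_(i <- r | P i) (F i)%:M.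
Proof.
have f0 : ((0 : C)%:M : 'M[C]_m) = 0 by apply/matrixP => i j; rewrite !mxE mul0rn.
exact: (big_morph _ (@scalD C m) f0).
Qed.

Lemma tr_sum (C : numClosedFieldType) m (T : Type) (r : seq T) (P : pred T)
  (F : T -> 'M[C]_m) :
  \tr (\sum_(i <- r | P i) F i) = \sum_(i <- r | P i) \tr (F i).
Proof.
have f0 : \tr (0 : 'M[C]_m) = 0 by rewrite /mxtrace big1 // => i _; rewrite mxE.
exact: (big_morph _ (@mxtraceD C m) f0).
Qed.

Lemma sum_unit (V : nmodType) (F : unit -> V) : \sum_(u : unit) F u = F tt.
Proof. by rewrite (big_pred1 tt) // => -[]. Qed.

Lemma ptrace1_sc (C : numClosedFieldType) (c : C) :
  ptrace1 (c%:M : 'M[C]_(1 * 1)) = (c%:M : 'M[C]_1).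
Proof. by apply/matrixP => b b'; rewrite !ord1 !mxE big_ord1 !mxE !eqxx. Qed.

Lemma ptrace2_sc (C : numClosedFieldType) (c : C) :
  ptrace2 (c%:M : 'M[C]_(1 * 1)) = (c%:M : 'M[C]_1).
Proof. by apply/matrixP => b b'; rewrite !ord1 !mxE big_ord1 !mxE !eqxx. Qed.


Lemma sum_pair (V : nmodType) (A B : finType) (F : A * B -> V) :
  \sum_(q : A * B) F q = \sum_a \sum_b F (a, b).
Proof. by rewrite pair_bigA; apply: eq_bigr => -[]. Qed.

Theorem corollary2 (C : numClosedFieldType) (Omega Lambda : finType) (n p : nat)
  (I : Omega -> 'M[C]_n -> 'M[C]_n) (J : Lambda -> 'M[C]_n -> 'M[C]_p)
  (AI : Omega -> 'M[C]_n) (AJ : Lambda -> 'M[C]_n) :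
  instrument I -> instrument J ->
  induces_povm I AI -> induces_povm J AJ ->
  [/\ ins_nondisturb I J -> povm_nondisturb AI J,
      povm_nondisturb AI J -> compatible (povm_ins AI) J &
      compatible (povm_ins AI) J ->
        compatible (povm_ins AI) (chan_ins (induced_channel J)) /\
        compatible (povm_ins AI) (povm_ins AJ)].
Proof.
move=> insI [linJ [cpJ [tniJ tpJ]]] indI indJ; split.
- by move=> nd; exists I; split.
- case=> I' [[linI' [cpI' [tniI' tpI']]] indI' ndI'].
  exists (fun xy rho => Lift (J xy.2 (I' xy.1 rho))); split.
    split; [|split; [|split]].
    + by move=> [x y] a X Y /=; rewrite linI' linJ Lift_lin.
    + move=> [x y] /=; apply: cp_Lift => k B pB.
      exact: (cpJ y _ _ (cpI' x _ _ pB)).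
    + move=> [x y] rho prho /=; rewrite tr_Lift.
      exact: le_trans (tniJ y _ (cp_psd (cpI' x) prho)) (tniI' x _ prho).
    + move=> X; rewrite /induced_channel tr_sum.
      rewrite sum_pair /=.
      rewrite -(tpI' X) /induced_channel tr_sum; apply: eq_bigr => x _.
      rewrite -(tpJ (I' x X)) /induced_channel tr_sum.
      by apply: eq_bigr => y _; rewrite tr_Lift.
  move=> rho srho; split.
    move=> y; under eq_bigr => x _ do rewrite ptrace1_Lift /=.
    by rewrite -lin_sum //; exact: ndI'.
  move=> x; under eq_bigr => y _ do rewrite ptrace2_Lift /=.
  rewrite -scal_sum -tr_sum /povm_ins indI' //.
  by have := tpJ (I' x rho); rewrite /induced_channel => ->.
- case=> G [[linG [cpG [tniG tpG]]] HG]; split.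
  + exists (fun xu rho => \sum_y G (xu.1, y) rho); split.
      split; [|split; [|split]].
      * by move=> [x u] /=; apply: (@lin_sumf C _ _ _ (index_enum Lambda) (fun y => G (x, y))) => y; exact: linG.
      * by move=> [x u] /=; apply: (@cp_sum C _ _ _ (index_enum Lambda) (fun y => G (x, y))) => y; exact: cpG.
      * move=> [x u] rho prho /=; rewrite tr_sum -(tpG rho) /induced_channel tr_sum.
        rewrite sum_pair /=.
        rewrite (bigD1 x) //= lerDl; apply: sumr_ge0 => x' _; apply: sumr_ge0 => y _.
        exact: psd_tr (cp_psd (cpG _) prho).
      * move=> X; rewrite /induced_channel.
        rewrite sum_pair /=.
        under eq_bigr => x _ do rewrite sum_unit.
        by rewrite -(tpG X) /induced_channel sum_pair.
    move=> rho srho; have [H1 H2] := HG rho srho; split.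
      move=> u /=; rewrite /chan_ins /induced_channel.
      under eq_bigr => x _ do rewrite ptrace1D.
      by rewrite exchange_big; apply: eq_bigr => y _; exact: H1.
    by move=> x; rewrite sum_unit /= ptrace2D; exact: H2.
  + exists (fun xy rho => ((\tr (G xy rho))%:M : 'M[C]_(1 * 1))); split.
      split; [|split; [|split]].
      * move=> xy a X Y /=; rewrite linG mxtraceD mxtraceZ scalD.
        by rewrite scale_scalar_mx.
      * by move=> xy; apply: cp_trS.
      * move=> xy rho prho /=; rewrite mxtrace_scalar mulr1n.
        exact: tniG.
      * move=> X; rewrite /induced_channel tr_sum.
        under eq_bigr => xy _ do rewrite mxtrace_scalar mulr1n.
        by rewrite -tr_sum; exact: tpG.
    move=> rho srho; have [H1 H2] := HG rho srho; split.
      move=> y; under eq_bigr => x _ do rewrite ptrace1_sc.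
      rewrite -scal_sum /povm_ins (indJ y rho srho) -(H1 y) tr_sum.
      by congr (_%:M); apply: eq_bigr => x _; rewrite tr_ptrace1.
    move=> x; under eq_bigr => y _ do rewrite ptrace2_sc.
    rewrite -scal_sum /povm_ins.
    have := congr1 mxtrace (H2 x); rewrite /povm_ins mxtrace_scalar mulr1n tr_sum => <-.
    by congr (_%:M); apply: eq_bigr => y _; rewrite tr_ptrace2.
Qed.
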